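(* Let $q,r,\nu$ be positive integers with $\nu\le q$. Then the matrix $K(z)=I_\nu\otimes F(z)+S_\nu\otimes F'(z)\in\mathbb{C}^{\nu r\times\nu(r-1)}$ has rank $\nu(r-1)$ and satisfies $\mathcal{N}^0(z)K(z)=0$ for all $z$; in other words, the columns of $K(z)$ form a basis of the kernel of $\mathcal{N}^0(z)$. (For $r=1$, $K(z)$ is empty and by convention its columns span $\{0\}$.)
   Context: Matrix indices start at $0$. $u(z)=(1,z,\dots,z^{q-1})^\top$, $w(z)=(1,z,\dots,z^{r-1})$, $M(z)=u(z)w(z)\in\mathbb{C}^{q\times r}$ and $\mathcal{N}^0(z)=\big(M(z),\frac{1}{1!}M'(z),\dots,\frac{1}{(\nu-1)!}M^{(\nu-1)}(z)\big)\in\mathbb{C}^{q\times\nu r}$. $F(z)\in\mathbb{C}^{r\times(r-1)}$ has entries $F_{ii}=-z$, $F_{i+1,i}=1$, and $0$ otherwise; $F'(z)$ is its derivative in $z$. $S_\nu$ is the $\nu\times\nu$ shift matrix with $(S_\nu)_{ij}=\delta_{i+1,j}$. Thus $K(z)$ is block upper bidiagonal with blocks $F(z)$ on the diagonal and $F'(z)$ on the block superdiagonal. *)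

(* Defs.v *)
From HB Require Import structures.
From mathcomp Require Import all_boot all_order all_algebra.
From mathcomp Require Import mxtens complex.
From mathcomp Require Import Rstruct.
Set Implicit Arguments. Unset Strict Implicit. Unset Printing Implicit Defensive.
Import Order.TTheory GRing.Theory Num.Theory.
Local Open Scope ring_scope.

Notation CC := ((Rdefinitions.R)[i]) (only parsing).

Definition Fpoly (r : nat) : 'M[{poly CC}]_(r, r.-1) :=
  \matrix_(i < r, j < r.-1)
    (if (i == j :> nat) then - 'X
     else if (i == j.+1 :> nat) then 1 else 0).

Definition Fmx (r : nat) (z : CC) : 'M[CC]_(r, r.-1) :=
  map_mx (fun p => p.[z]) (Fpoly r).
Definition dFmx (r : nat) (z : CC) : 'M[CC]_(r, r.-1) :=
  map_mx (fun p => (p^`()).[z]) (Fpoly r).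

Definition shiftmx (nu : nat) : 'M[CC]_nu :=
  \matrix_(i < nu, j < nu) ((i.+1 == j :> nat)%:R).

(* K(z) = I_nu (x) F(z) + S_nu (x) F'(z)  (Kronecker products, standard
   row-major block indexing (a,b) |-> a * r + b, from mxtens). *)
Definition Kmx (nu r : nat) (z : CC) : 'M[CC]_(nu * r, nu * r.-1) :=
  (1%:M : 'M[CC]_nu) *t Fmx r z + shiftmx nu *t dFmx r z.

Definition Mpoly (q r : nat) : 'M[{poly CC}]_(q, r) :=
  \matrix_(i < q, j < r) 'X^(i + j).

(* N^0(z) = (M(z), M'(z)/1!, ..., M^(nu-1)(z)/(nu-1)!): column index
   k * r + j  (block k, column j) holds (1/k!) M^(k)(z)_{., j}.
   p^`N(k) is the k-th derivative of p divided by k!. *)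
Definition N0mx (q r nu : nat) (z : CC) : 'M[CC]_(q, nu * r) :=
  \matrix_(i < q, c < nu * r)
    (((Mpoly q r i (mxtens_unindex c).2)^`N((mxtens_unindex c).1)).[z]).

(* Main.v *)
Require Import Defs.
From HB Require Import structures.
From mathcomp Require Import all_boot all_order all_algebra.
From mathcomp Require Import mxtens complex Rstruct.
From mathcomp Require Import ring zify.
Import Order.TTheory GRing.Theory Num.Theory.
Local Open Scope ring_scope.

Lemma sum_nat_delta (R : pzRingType) n (h : nat -> R) k :
  \sum_(b < n) (b == k :> nat)%:R * h b = (k < n)%:R * h k.
Proof.
elim: n => [|n IH]; first by rewrite big_ord0 ltn0 mul0r.
rewrite big_ord_recr /= IH ltnS.
case: eqP => [->|ne]; first by rewrite ltnn leqnn mul0r add0r.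
have /negPf kn : k != n by apply/eqP=> e; apply: ne.
by rewrite mul0r addr0 [in RHS]leq_eqVlt kn.
Qed.

Lemma sum_tens (R : pzRingType) m n (G : 'I_(m * n) -> R) :
  \sum_(c < m * n) G c = \sum_(a < m) \sum_(b < n) G (mxtens_index (a, b)).
Proof.
rewrite pair_big /=.
rewrite (reindex (@mxtens_index m n)) /=; last first.
  by exists (@mxtens_unindex m n)=> i _; rewrite (mxtens_indexK, mxtens_unindexK).
by apply: eq_bigr => -[a b] _.
Qed.

Definition g (z : CC) k n := (('X^n : {poly CC})^`N(k)).[z].

Lemma g0 z n : g z 0 n = z ^+ n.
Proof. by rewrite /g nderivn0 hornerXn. Qed.

Lemma gS z k n : g z k.+1 n.+1 = z * g z k.+1 n + g z k n.
Proof.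
rewrite /g exprSr -[_ * 'X]addr0 -[0 : {poly CC}]/(0%:P) nderivnMXaddC.
by rewrite hornerD hornerMX addrC mulrC.
Qed.

Lemma gdiag z k : g z k k = 1.
Proof. by rewrite /g nderivnXn subnn binn expr0 hornerMn hornerC. Qed.

Lemma glt z k n : (n < k)%N -> g z k n = 0.
Proof. by move=> h; rewrite /g nderivnXn bin_small // mulr0n horner0. Qed.

Lemma FmxE r z (b : 'I_r) (d : 'I_r.-1) :
  Fmx r z b d = (b == d :> nat)%:R * (- z) + (b == d.+1 :> nat)%:R.
Proof.
rewrite !mxE; case: eqP => [e|ne]; case: eqP => [e'|ne'].
- exfalso; lia.
- rewrite hornerN hornerX /=; ring.
- rewrite hornerC /=; ring.
- rewrite horner0 /=; ring.
Qed.

Lemma dFmxE r z (b : 'I_r) (d : 'I_r.-1) :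
  dFmx r z b d = (b == d :> nat)%:R * (- 1).
Proof.
rewrite !mxE; case: eqP => [e|ne]; first by rewrite derivN derivX hornerN hornerC /=; ring.
case: eqP => _; rewrite ?derivC ?deriv0 ?hornerC ?horner0 /=; ring.
Qed.

Lemma KmxE nu r z a b c d :
  Kmx nu r z (mxtens_index (a, b)) (mxtens_index (c, d)) =
  (a == c :> nat)%:R * Fmx r z b d + (a.+1 == c :> nat)%:R * dFmx r z b d.
Proof.
by rewrite /Kmx mxE !tensmxE !mxE.
Qed.

Lemma N0E q r nu z i a b :
  N0mx q r nu z i (mxtens_index (a, b)) = g z a (i + b).
Proof. by rewrite /N0mx !mxE mxtens_indexK. Qed.
Lemma N0K0 q r' nu z : N0mx q r'.+1 nu z *m Kmx nu r'.+1 z = 0.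
Proof.
apply/matrixP => i j; rewrite -[j](@mxtens_unindexK nu r'); move: (mxtens_unindex j) => [c d].
rewrite !mxE sum_tens.
pose P a n := (a==c:>nat)%:R * (- z * g z a n) + (a.+1==c:>nat)%:R * - g z a n.
pose Q a n := (a==c:>nat)%:R * g z a n.
transitivity (\sum_(a < nu) (P a (i + d)%N + Q a (i + d.+1)%N)).
  apply: eq_bigr => a _.
  rewrite (eq_bigr (fun b : 'I_r'.+1 => (b==d:>nat)%:R * P a (i + b)%N + (b==d.+1:>nat)%:R * Q a (i + b)%N)); last first.
    by move=> b _; rewrite N0E KmxE FmxE dFmxE /P /Q; ring.
  rewrite big_split /= (@sum_nat_delta _ _ (fun b => P a (i + b)%N)) (@sum_nat_delta _ _ (fun b => Q a (i + b)%N)).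
  by rewrite ltnS (ltnW (ltn_ord d)) ltnS (ltn_ord d) /= !mul1r addnS.
rewrite /P /Q big_split /= big_split /= (@sum_nat_delta _ _ (fun a => - z * g z a (i+d)%N)).
rewrite (@sum_nat_delta _ _ (fun a => g z a (i+d.+1)%N)) ltn_ord !mul1r.
clear P Q; move: c => [[|c'] hc] /=.
  rewrite big1 ?addr0; last by move=> a _; rewrite mul0r.
  by rewrite !g0 addnS exprS; ring.
rewrite (eq_bigr (fun a : 'I_nu => (a == c' :> nat)%:R * - g z a (i + d)%N)); last first.
  by move=> a _; rewrite eqSS.
rewrite (@sum_nat_delta _ _ (fun a => - g z a (i+d)%N)) (ltnW hc) mul1r.
by rewrite addnS gS; ring.
Qed.

Lemma TE nu r' z a (d : 'I_r') c d' :
  Kmx nu r'.+1 z (mxtens_index (a, lift ord0 d)) (mxtens_index (c, d')) =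
  (a==c:>nat)%:R * ((d.+1 == d' :>nat)%:R * -z + (d.+1 == d'.+1 :>nat)%:R)
  + (a.+1==c:>nat)%:R * ((d.+1 == d' :>nat)%:R * -1).
Proof. by rewrite KmxE FmxE dFmxE. Qed.

Lemma rankK nu r' z : \rank (Kmx nu r'.+1 z) = (nu * r')%N.
Proof.
apply/eqP; rewrite eqn_leq rank_leq_col /=.
pose f (k : 'I_(nu*r')) : 'I_(nu * r'.+1) :=
  mxtens_index ((@mxtens_unindex nu r' k).1, lift ord0 (@mxtens_unindex nu r' k).2).
pose T := rowsub f (Kmx nu r'.+1 z).
have TkE : forall k l, T k l = Kmx nu r'.+1 z (f k) l by move=> k l; rewrite /T mxE.
have hT : \rank T = (nu * r')%N.
  have htrig : is_trig_mx T^T.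
  { apply/is_trig_mxP => k l; rewrite mxE TkE /f.
    rewrite -[k](@mxtens_unindexK nu r' k) -[l](@mxtens_unindexK nu r' l) !mxtens_indexK.
    move: (mxtens_unindex k) (mxtens_unindex l) => [[c hc] [d' hd']] [[a ha] [d hd]] /= hlt.
    rewrite TE /=.
    case: (eqVneq a c) => [ac|/negbTE nac].
      subst a.
      have h1 : (c.+1 == c) = false by apply/negbTE/eqP; lia.
      have h2 : (d.+1 == d') = false by apply/negbTE/eqP; lia.
      have h3 : (d.+1 == d'.+1) = false by apply/negbTE/eqP; lia.
      by rewrite h1 h2 h3 /=; ring.
    rewrite mul0r add0r.
    case: (eqVneq a.+1 c) => [ac1|/negbTE nac1]; last by rewrite mul0r.
    by exfalso; subst c; rewrite mulSn in hlt; lia. }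
  apply/mxrank_unit; rewrite unitmxE -det_tr det_trig //.
    rewrite big1 ?unitr1 // => k _; rewrite mxE TkE /f.
    rewrite -[in X in Kmx _ _ _ _ X](@mxtens_unindexK nu r' k).
    move: (mxtens_unindex k) => [a d] /=.
    rewrite TE !eqxx /=.
    have -> : (d.+1 == d :> nat) = false by rewrite gtn_eqF.
    have -> : (a.+1 == a :> nat) = false by rewrite gtn_eqF.
    by rewrite /=; ring.
rewrite -[X in (X <= _)%N]hT.
by rewrite mxrankS // rowsub_sub.
Qed.

Lemma rankN0 q r' nu z : (nu <= q)%N -> (nu <= \rank (N0mx q r'.+1 nu z))%N.
Proof.
move=> hnuq.
pose U := rowsub (widen_ord hnuq)
  (colsub (fun k : 'I_nu => @mxtens_index nu r'.+1 (k, ord0)) (N0mx q r'.+1 nu z)).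
have hU : \rank U = nu.
  apply/mxrank_unit; rewrite unitmxE det_trig.
    by rewrite big1 ?unitr1 // => k _; rewrite mxE mxE N0E /= addn0 gdiag.
  apply/is_trig_mxP => i k hik; rewrite mxE mxE N0E /= addn0 glt //.
rewrite -{1}hU; apply: (leq_trans (mxrankS (rowsub_sub _ _))).
rewrite (_ : colsub _ _ = N0mx q r'.+1 nu z *m
   colsub (fun k : 'I_nu => @mxtens_index nu r'.+1 (k, ord0)) 1%:M); last first.
  by rewrite mulmx_colsub mulmx1.
exact: mxrankM_maxl.
Qed.

Theorem proposition4p1 (q r nu : nat) (hq : (0 < q)%N) (hr : (0 < r)%N)
  (hnu : (0 < nu)%N) (hnuq : (nu <= q)%N) (z : CC) :
  [/\ \rank (Kmx nu r z) = (nu * r.-1)%N,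
      N0mx q r nu z *m Kmx nu r z = 0
    & ((Kmx nu r z)^T == kermx (N0mx q r nu z)^T)%MS].
Proof.
case: r hr => // r' _.
have h0 := N0K0 q r' nu z.
split; [exact: rankK | exact: h0 |].
have sub : ((Kmx nu r'.+1 z)^T <= kermx (N0mx q r'.+1 nu z)^T)%MS.
  by rewrite sub_kermx -trmx_mul h0 trmx0.
have [hle heq] := mxrank_leqif_eq sub.
rewrite -heq; move: hle.
rewrite !mxrank_tr mxrank_ker mxrank_tr rankK /=.
have := rankN0 q r' nu z hnuq.
move: (\rank (N0mx q r'.+1 nu z)) => k h1 h2.
apply/eqP; move: h1 h2; rewrite mulnS; lia.
Qed.
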